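(* Let $A \in \mathbb{R}^{n\times d}$, $b\in\mathbb{R}^n$, and suppose $Ax=b$ admits a solution $x^*$. Let $w$ be a random variable in $\mathbb{R}^n$, $\mathcal{N}(w) = \mathrm{span}\lbrace z \in \mathbb{R}^d : \mathbb{P}[z'A'w=0]=1\rbrace$, $\mathcal{R}(w) = \mathcal{N}(w)^\perp$, and let $\mathcal{V}(w)$ be the subspace with $\mathcal{V}(w)\perp\mathcal{R}(w)$ and $\mathcal{V}(w)\oplus\mathcal{R}(w) = \mathrm{row}(A)$. Let $\lbrace w_\ell:\ell\geq 0\rbrace$ be random variables in $\mathbb{R}^n$ with $\mathbb{P}[A'w_\ell\in\mathcal{R}(w)]=1$ for all $\ell$, let $x_0\in\mathbb{R}^d$ be arbitrary and $x_{k+1} = x_k + A'w_kw_k'(b-Ax_k)/\|A'w_k\|_2^2$. Define stopping times $\tau_0=0$, $\tau_1 = \min\lbrace k\geq0 : \mathrm{span}\lbrace A'w_0,\ldots,A'w_k\rbrace = \mathcal{R}(w)\rbrace$, and for $\ell\geq 2$, $\tau_\ell = \min\lbrace k>\tau_{\ell-1} : \mathrm{span}\lbrace A'w_{\tau_{\ell-1}+1},\ldots,A'w_k\rbrace = \mathcal{R}(w)\rbrace$ if $\tau_{\ell-1}<\infty$, else $\tau_\ell=\infty$. For finite stopping times, let $\mathcal{F}_\ell$ be the set of matrices whose columns form a maximal linearly independent subset of $\lbrace A'w_{\tau_{\ell-1}+1}/\|A'w_{\tau_{\ell-1}+1}\|_2,\ldots,A'w_{\tau_\ell}/\|A'w_{\tau_\ell}\|_2\rbrace$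 and $\gamma_\ell = 1-\min_{F\in\mathcal{F}_\ell}\det(F'F)$. Then, on the events $\bigcap_{\ell=0}^\infty\lbrace\tau_\ell<\infty\rbrace$ and $\lbrace\lim_{\ell\to\infty}\prod_{j=1}^\ell\gamma_j = 0\rbrace$, $\lim_{k\to\infty}Ax_k = b$ if and only if $P_{\mathcal{V}(w)}x_0 = P_{\mathcal{V}(w)}x^*$.
   Context: $P_W$ is orthogonal projection onto $W$; $\mathrm{row}(A)$ is the row space of $A$; $A'$ is the transpose. The iteration presupposes $A'w_k\neq 0$. *)

(* Defs.v *)
(* Vectors of R^m are row vectors 'rV[R]_m;
   A' w (a vector of R^d) is rendered as  w *m A  and  A x  as  x *m A^T. *)
From HB Require Import structures.
From mathcomp Require Import all_boot all_order all_algebra.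
From mathcomp Require Import all_classical all_reals all_analysis.
Set Implicit Arguments. Unset Strict Implicit. Unset Printing Implicit Defensive.
Import Order.TTheory GRing.Theory Num.Theory.
Local Open Scope ring_scope.

Section KaczDefs.
Variable R : realType.

Definition dotv m (u v : 'rV[R]_m) : R := (u *m v^T) 0 0.

Definition norm2 m (u : 'rV[R]_m) : R := Num.sqrt (dotv u u).

Fixpoint kacz n d (A : 'M[R]_(n, d)) (b : 'rV[R]_n) (W : nat -> 'rV[R]_n)
  (x0 : 'rV[R]_d) (k : nat) : 'rV[R]_d :=
  match k with
  | 0 => x0
  | k'.+1 =>
      let x := kacz A b W x0 k' in
      let a := W k' *m A in
      x + (dotv (W k') (b - x *m A^T) / dotv a a) *: a
  end.

(* span{A'w_s, ..., A'w_t} as (the row space of) a square matrix *)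
Definition spanmx n d (A : 'M[R]_(n, d)) (W : nat -> 'rV[R]_n) (s t : nat) : 'M[R]_d :=
  (\sum_(s <= j < t.+1) <<W j *m A>>)%MS.

(* span{A'w_s, ..., A'w_t} = R(w), with R(w) the row space of Rm *)
Definition span_ok n d (A : 'M[R]_(n, d)) (W : nat -> 'rV[R]_n) (Rm : 'M[R]_d)
  (s t : nat) : bool := (spanmx A W s t == Rm)%MS.

(* first index of the l-th block (l >= 1 is passed as l.-1 + 1):
   block 1 starts at 0, block l >= 2 starts at tau_{l-1} + 1 *)
Definition blockstart (tau : nat -> nat) (lm1 : nat) : nat :=
  if lm1 is 0 then 0%N else (tau lm1).+1.

(* tau is the (everywhere finite) sequence of stopping times of the path W:
   tau_0 = 0, tau_1 = min {k >= 0 | span{A'w_0..A'w_k} = R(w)},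
   tau_l = min {k > tau_{l-1} | span{A'w_{tau_{l-1}+1}..A'w_k} = R(w)}. *)
Definition is_tau_seq n d (A : 'M[R]_(n, d)) (W : nat -> 'rV[R]_n) (Rm : 'M[R]_d)
  (tau : nat -> nat) : Prop :=
  tau 0%N = 0%N /\
  forall l : nat, let s := blockstart tau l in
    [/\ (s <= tau l.+1)%N, span_ok A W Rm s (tau l.+1) &
        forall k, (s <= k < tau l.+1)%N -> ~~ span_ok A W Rm s k].

Definition unitA n d (A : 'M[R]_(n, d)) (W : nat -> 'rV[R]_n) (j : nat) : 'rV[R]_d :=
  (norm2 (W j *m A))^-1 *: (W j *m A).

(* the matrix whose rows are the vectors u_{s+j}, j in J (i.e. F' in the paper) *)
Definition blockmx n d (A : 'M[R]_(n, d)) (W : nat -> 'rV[R]_n) (s m : nat)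
  (J : {set 'I_m}) : 'M[R]_(size (enum J), d) :=
  \matrix_(i < size (enum J), k < d)
     (unitA A W (s + nth 0%N [seq nat_of_ord j | j <- enum J] i)) 0 k.

Definition maxindep n d (A : 'M[R]_(n, d)) (W : nat -> 'rV[R]_n) (s m : nat)
  (J : {set 'I_m}) : bool :=
  row_free (blockmx A W s J) &&
  [forall j : 'I_m, (j \notin J) ==> ~~ row_free (blockmx A W s (j |: J))].

Definition mingram n d (A : 'M[R]_(n, d)) (W : nat -> 'rV[R]_n) (s t : nat) : R :=
  let vals := [seq \det (blockmx A W s J *m (blockmx A W s J)^T)
              | J <- enum [set J : {set 'I_(t - s).+1} | maxindep A W s J]] in
  foldr Num.min (head 0 vals) vals.

Definition gammaK n d (A : 'M[R]_(n, d)) (W : nat -> 'rV[R]_n) (tau : nat -> nat)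
  (l : nat) : R :=
  1 - mingram A W (blockstart tau l.-1) (tau l).

(* orthogonal projection onto the row space of V:  P = B'(BB')^{-1}B,
   B a basis (row_base) of the row space of V *)
Definition orthproj d (V : 'M[R]_d) (x : 'rV[R]_d) : 'rV[R]_d :=
  let B := row_base V in x *m (B^T *m invmx (B *m B^T) *m B).

End KaczDefs.

(* Main.v *)
Require Import Defs.
From HB Require Import structures.
From mathcomp Require Import all_boot all_order all_algebra.
From mathcomp Require Import all_classical all_reals all_analysis.
From mathcomp Require Import ring lra.
Import Order.TTheory GRing.Theory Num.Theory numFieldNormedType.Exports.
Set Implicit Arguments. Unset Strict Implicit. Unset Printing Implicit Defensive.
Local Open Scope ring_scope.


Section LinAlg.
Variable R : realType.
Variable d : nat.
Implicit Types (u v w x y : 'rV[R]_d).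

Lemma dotvE u v : dotv u v = \sum_k u 0 k * v 0 k.
Proof. by rewrite /dotv mxE; apply: eq_bigr => k _; rewrite mxE. Qed.

Lemma dotC u v : dotv u v = dotv v u.
Proof. by rewrite !dotvE; apply: eq_bigr => k _; rewrite mulrC. Qed.

Lemma dotDl u v w : dotv (u + v) w = dotv u w + dotv v w.
Proof. by rewrite !dotvE -big_split; apply: eq_bigr => k _; rewrite mxE mulrDl. Qed.

Lemma dotZl a u w : dotv (a *: u) w = a * dotv u w.
Proof. by rewrite !dotvE mulr_sumr; apply: eq_bigr => k _; rewrite mxE mulrA. Qed.

Lemma dotNl u w : dotv (- u) w = - dotv u w.
Proof. by rewrite -scaleN1r dotZl mulN1r. Qed.

Lemma dotBl u v w : dotv (u - v) w = dotv u w - dotv v w.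
Proof. by rewrite dotDl dotNl. Qed.

Lemma dotDr u v w : dotv w (u + v) = dotv w u + dotv w v.
Proof. by rewrite dotC dotDl !(dotC w). Qed.

Lemma dotZr a u w : dotv w (a *: u) = a * dotv w u.
Proof. by rewrite dotC dotZl dotC. Qed.

Lemma dotBr u v w : dotv w (u - v) = dotv w u - dotv w v.
Proof. by rewrite dotC dotBl !(dotC w). Qed.

Lemma dot0l u : dotv 0 u = 0.
Proof. by rewrite dotvE big1 // => k _; rewrite mxE mul0r. Qed.

Lemma dot0r u : dotv u 0 = 0.
Proof. by rewrite dotC dot0l. Qed.

Lemma dotv_ge0 u : 0 <= dotv u u.
Proof. by rewrite dotvE sumr_ge0 // => k _; rewrite -expr2 sqr_ge0. Qed.

Lemma dotv_eq0 u : dotv u u = 0 -> u = 0.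
Proof.
rewrite dotvE => /eqP; rewrite psumr_eq0; last by move=> k _; rewrite -expr2 sqr_ge0.
move=> /allP H; apply/matrixP => i k; rewrite (ord1 i) mxE.
have := H k (mem_index_enum _); rewrite implyTb mulf_eq0 orbb.
by move/eqP.
Qed.

Lemma dotv_gt0 u : u != 0 -> 0 < dotv u u.
Proof.
move=> Hu; rewrite lt_def dotv_ge0 andbT; apply/eqP => /dotv_eq0 H.
by rewrite H eqxx in Hu.
Qed.

Lemma CS u v : dotv u v ^+ 2 <= dotv u u * dotv v v.
Proof.
have [->|Hv] := eqVneq v 0; first by rewrite !dot0r mulr0 expr0n.
have Hp := dotv_gt0 Hv.
have H := dotv_ge0 (dotv v v *: u - dotv u v *: v).
rewrite !(dotBl, dotBr, dotZl, dotZr) (dotC v u) in H.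
have : 0 <= dotv v v * (dotv u u * dotv v v - dotv u v ^+ 2).
  by move: H; congr (_ <= _); ring.
by rewrite pmulr_rge0 // subr_ge0.
Qed.

Lemma dot_mulT n (w : 'rV[R]_n) (A : 'M[R]_(n, d)) y :
  dotv w (y *m A^T) = dotv (w *m A) y.
Proof. by rewrite /dotv trmx_mul trmxK mulmxA. Qed.

Lemma dot_mxT n (A : 'M[R]_(n, d)) y i : (y *m A^T) 0 i = dotv y (row i A).
Proof. by rewrite dotvE mxE; apply: eq_bigr => k _; rewrite !mxE. Qed.

Lemma gram_unit m (B : 'M[R]_(m, d)) : row_free B -> B *m B^T \in unitmx.
Proof.
move=> Hf; rewrite -row_free_unit; apply/inj_row_free => v Hv.
have H0 : dotv (v *m B) (v *m B) = 0.
  by rewrite /dotv trmx_mul mulmxA -(mulmxA v) Hv mul0mx mxE.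
apply: (row_free_inj Hf); rewrite mul0mx; exact: dotv_eq0.
Qed.

Definition oproj (S : 'M[R]_d) x := orthproj S x.

Lemma proj_sub S x : (oproj S x <= S)%MS.
Proof.
rewrite /oproj /orthproj; move: (row_base_free S) (eq_row_base S).
move: (row_base S) => B _ HB; rewrite !mulmxA -HB; exact: submxMl.
Qed.

Lemma proj_perp S x v : (v <= S)%MS -> dotv (x - oproj S x) v = 0.
Proof.
rewrite -(eq_row_base S) => /submxP [c ->].
rewrite /dotv /oproj /orthproj.
move: (row_base_free S) c; move: (row_base S) => B HB c.
have HG := gram_unit HB.
rewrite trmx_mul mulmxA mulmxBl !mulmxA -(mulmxA _ B) mulmxKV //.
by rewrite subrr mul0mx mxE.
Qed.

Lemma proj_uniq S x w : (w <= S)%MS -> (forall v, (v <= S)%MS -> dotv (x - w) v = 0) ->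
  w = oproj S x.
Proof.
move=> Hw Hp; apply/eqP; rewrite -subr_eq0; apply/eqP/dotv_eq0.
have Hs : (w - oproj S x <= S)%MS by rewrite addmx_sub ?eqmx_opp ?proj_sub.
have E : w - oproj S x = (x - oproj S x) - (x - w) by rewrite opprB [RHS]addrC addrA subrK.
rewrite {1}E.
by rewrite dotBl proj_perp // Hp // subrr.
Qed.

Lemma proj_id S v : (v <= S)%MS -> oproj S v = v.
Proof. by move=> Hv; symmetry; apply: proj_uniq => // y _; rewrite subrr dot0l. Qed.

Lemma projB S x y : oproj S (x - y) = oproj S x - oproj S y.
Proof. by rewrite /oproj /orthproj mulmxBl. Qed.

Lemma projD S x y : oproj S (x + y) = oproj S x + oproj S y.
Proof. by rewrite /oproj /orthproj mulmxDl. Qed.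

Lemma projZ S a x : oproj S (a *: x) = a *: oproj S x.
Proof. by rewrite /oproj /orthproj scalemxAl. Qed.

Lemma proj_eqmx S S' x : (S == S')%MS -> oproj S x = oproj S' x.
Proof.
move=> /eqmxP HS; apply: proj_uniq; first by rewrite -HS proj_sub.
by move=> v; rewrite -HS; apply: proj_perp.
Qed.

Lemma perp_proj S x v : (v <= S)%MS -> dotv x v = dotv (oproj S x) v.
Proof. by move=> Hv; rewrite -[x in LHS](subrK (oproj S x)) dotDl proj_perp // add0r. Qed.

Lemma pythag S x : dotv x x = dotv (oproj S x) (oproj S x) + dotv (x - oproj S x) (x - oproj S x).
Proof.
have Hq := proj_perp x (proj_sub S x).
have Hq' : dotv (oproj S x) (x - oproj S x) = 0 by rewrite dotC.
move: Hq Hq'; set p := oproj S x; set q := x - p => Hq Hq'.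
have E : x = p + q by rewrite /q addrC subrK.
by clearbody q; rewrite {1 2}E dotDl !dotDr Hq Hq' add0r addr0.
Qed.


Lemma gram_cast p1 p2 (e : p1 = p2) (F : 'M[R]_(p1, d)) :
  \det (castmx (e, erefl d) F *m (castmx (e, erefl d) F)^T) = \det (F *m F^T).
Proof. by case: p2 / e; rewrite castmx_id. Qed.

Lemma gram0 p (F : 'M[R]_(p, d)) : p = 0%N -> \det (F *m F^T) = 1.
Proof. by move=> e; move: F; rewrite e => F; exact: det_mx00. Qed.

Lemma proj_genmx p (F : 'M[R]_(p, d)) u : (oproj <<F>>%MS u <= F)%MS.
Proof. by have := proj_sub <<F>>%MS u; rewrite genmxE. Qed.

Lemma gram_col p (F : 'M[R]_(p, d)) (u : 'rV[R]_d) :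
  \det (col_mx F u *m (col_mx F u)^T) =
  \det (F *m F^T) * dotv (u - oproj <<F>>%MS u) (u - oproj <<F>>%MS u).
Proof.
have HP := proj_genmx F u.
have Hperp : forall i, dotv (u - oproj <<F>>%MS u) (row i F) = 0.
  by move=> i; apply: proj_perp; rewrite genmxE row_sub.
move: HP Hperp; set P := oproj _ u; set q := u - P => HP Hperp.
case/submxP: HP => c Hc.
have Hq : F *m q^T = 0.
  apply/matrixP => i j; rewrite (ord1 j) [RHS]mxE -(Hperp i) dotC dotvE mxE.
  by apply: eq_bigr => k _; rewrite !mxE.
have Hq2 : q *m F^T = 0 by rewrite -(trmxK (q *m F^T)) trmx_mul trmxK Hq trmx0.
have E : col_mx F u = block_mx 1%:M 0 c 1%:M *m col_mx F q.
  by rewrite mul_block_col !mul1mx mul0mx addr0 -Hc /q addrC subrK.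
rewrite E trmx_mul !mulmxA -(mulmxA _ (col_mx F q)) !det_mulmx det_tr det_lblock !det1 mulr1 !mul1r.
rewrite tr_col_mx mul_col_row Hq Hq2 det_ublock det_mx11.
by rewrite mulr1.
Qed.

End LinAlg.
Lemma meany_step (R : realFieldType) (c P al2 be ta s2 D : R) :
  0 <= c -> c <= 1 -> 0 < s2 -> s2 <= 1 -> 0 <= P -> D = P - al2 -> 0 <= al2 ->
  c * P <= D -> be ^+ 2 <= al2 * (1 - s2) ->
  c * s2 * P + c * ta ^+ 2 <= D + (be + ta) ^+ 2.
Proof.
move=> c0 c1 s0 s1 P0 HD a0 HcP Hb.
set Q := c * (1 - s2) * P + be ^+ 2 + 2 * be * ta + (1 - c) * ta ^+ 2.
have E : D + (be + ta) ^+ 2 - (c * s2 * P + c * ta ^+ 2) = (D - c * P) + Q by rewrite /Q; ring.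
suff HQ : 0 <= Q.
  rewrite -subr_ge0 E; apply: addr_ge0 => //; by rewrite subr_ge0.
have H1 : al2 <= (1 - c) * P by rewrite mulrBl mul1r; lra.
have H2 : be ^+ 2 <= (1 - c) * (1 - s2) * P.
  apply: (le_trans Hb); rewrite -mulrA [_ * P]mulrC mulrA ler_wpM2r //; lra.
have E2 : (1 - c) * Q = ((1 - c) * ta + be) ^+ 2 + c * ((1 - c) * (1 - s2) * P - be ^+ 2) by rewrite /Q; ring.
have HQ2 : 0 <= (1 - c) * Q.
  rewrite E2; apply: addr_ge0; first exact: sqr_ge0.
  by apply: mulr_ge0 => //; rewrite subr_ge0.
have [c1'|] := ltP c 1.
  by rewrite pmulr_rge0 // in HQ2; lra.
move=> c1''; have Hc : c = 1 by apply: le_anti; rewrite c1 c1''.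
have Hal : al2 = 0 by move: H1; rewrite Hc subrr mul0r => H1; apply: le_anti; rewrite H1 a0.
have Hbe : be = 0.
  by apply/eqP; rewrite -sqrf_eq0 eq_le sqr_ge0 andbT; move: Hb; rewrite Hal mul0r.
have h : 0 <= (1 - s2) * P by apply: mulr_ge0 => //; lra.
rewrite /Q Hbe Hc; nra.
Qed.


Section Meany.
Variable R : realType.
Variable d : nat.
Variable U : nat -> 'rV[R]_d.
Hypothesis HU : forall k, U k = 0 \/ dotv (U k) (U k) = 1.
Variable s m : nat.

Local Notation nrm x := (dotv x x).

Fixpoint zs (x : 'rV[R]_d) k := match k with
  | 0 => x
  | k'.+1 => zs x k' - dotv (zs x k') (U (s + k')) *: U (s + k') end.

Definition Sp k : 'M[R]_d := (\sum_(0 <= i < k) <<U (s + i)>>)%MS.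
Definition newp k : bool := ~~ (U (s + k) <= Sp k)%MS.
Definition Gk k : {set 'I_m} := [set j : 'I_m | (j < k)%N && newp j].
Definition BM (J : {set 'I_m}) : 'M[R]_(size (enum J), d) :=
  \matrix_(i < size (enum J), c < d)
     U (s + nth 0%N [seq nat_of_ord j | j <- enum J] i) 0 c.
Definition cg k := \det (BM (Gk k) *m (BM (Gk k))^T).

Lemma unit_step (z u : 'rV[R]_d) : (u = 0 \/ nrm u = 1) ->
  nrm (z - dotv z u *: u) = nrm z - (dotv z u) ^+ 2.
Proof.
case=> [->|H1]; first by rewrite dot0r scale0r subr0 expr0n subr0.
rewrite !(dotBl, dotBr, dotZl, dotZr) H1 (dotC u z); ring.
Qed.

Lemma BM_sub_sum (J : {set 'I_m}) : (BM J <= \sum_(j in J) <<U (s + j)>>)%MS.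
Proof.
apply/row_subP => i.
have Hi : (i < size [seq nat_of_ord j | j <- enum J])%N by rewrite size_map.
have /mapP [j Hj Ej] := mem_nth 0%N Hi.
have -> : row i (BM J) = U (s + j).
  by apply/rowP => c; rewrite !mxE Ej.
by apply: (sumsmx_sup j); [rewrite -mem_enum | rewrite genmxE].
Qed.

Lemma sum_sub_BM (J : {set 'I_m}) : (\sum_(j in J) <<U (s + j)>> <= BM J)%MS.
Proof.
apply/sumsmx_subP => j Hj; rewrite genmxE.
have Hj' : val j \in [seq nat_of_ord j | j <- enum J] by rewrite (mem_map val_inj) mem_enum.
have Hi : (index (val j) [seq nat_of_ord j | j <- enum J] < size (enum J))%N.
  by rewrite -(size_map val) index_mem.
apply: (eq_row_sub (Ordinal Hi)); apply/rowP => c; rewrite !mxE /=.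
by rewrite nth_index.
Qed.

Lemma BM_eq_sum (J : {set 'I_m}) : (BM J == \sum_(j in J) <<U (s + j)>>)%MS.
Proof. by rewrite /eqmx BM_sub_sum sum_sub_BM. Qed.

Lemma Sp_rec k : Sp k.+1 = (Sp k + <<U (s + k)>>)%MS.
Proof. by rewrite /Sp big_nat_recr. Qed.

Lemma Sp0 : Sp 0 = 0.
Proof. by rewrite /Sp big_geq. Qed.

Lemma Sp_mono j k : (j <= k)%N -> (Sp j <= Sp k)%MS.
Proof. by move=> Hjk; rewrite /Sp (big_cat_nat (leq0n j) Hjk) addsmxSl. Qed.

Lemma Gk_step k (Hk : (k < m)%N) :
  Gk k.+1 = if newp k then Ordinal Hk |: Gk k else Gk k.
Proof.
apply/setP => j; rewrite !inE ltnS leq_eqVlt.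
have [Ejk|Njk] /= := eqVneq (nat_of_ord j) k.
  have -> : j = Ordinal Hk by apply: val_inj.
  by case: ifP => Hn; rewrite ?inE ?eqxx ?ltnn /= ?Hn.
have HjK : (j == Ordinal Hk) = false by apply/negbTE; rewrite -val_eqE /=.
by case: ifP => Hn; rewrite ?inE ?HjK.
Qed.

Lemma Gk0 : Gk 0 = finset.set0.
Proof. by apply/setP => j; rewrite !inE ltn0. Qed.

Lemma sum_Gk k : (k <= m)%N -> (\sum_(j in Gk k) <<U (s + j)>> == Sp k)%MS.
Proof.
elim: k => [_|k IH Hk]; first by rewrite Gk0 big_set0 Sp0 /eqmx submx_refl.
have Hk' : (k < m)%N by [].
move: (IH (ltnW Hk')) => /eqmxP IH'.
rewrite (Gk_step Hk') Sp_rec; case Hn: (newp k).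
- have Hnot : Ordinal Hk' \notin Gk k by rewrite inE /= ltnn.
  rewrite big_setU1 //= addsmxC; apply/eqmxP; exact: adds_eqmx.
- move: Hn => /negbFE Hu.
  have -> : (Sp k + <<U (s + k)>> :=: Sp k)%MS by apply/addsmx_idPl; rewrite genmxE.
  apply/andP; split; first by rewrite IH'.
  by rewrite addsmx_sub !IH' submx_refl genmxE Hu.
Qed.

Lemma Gk_lt k j : j \in Gk k -> (j < k)%N.
Proof. by rewrite inE => /andP []. Qed.

Lemma enum_rcons (J : {set 'I_m}) (k : 'I_m) : (forall j, j \in J -> (j < k)%N) ->
  [seq nat_of_ord j | j <- enum (k |: J)] = rcons [seq nat_of_ord j | j <- enum J] k.
Proof.
move=> HJ.
have srt : forall A : {set 'I_m}, sorted ltn [seq nat_of_ord j | j <- enum A].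
  move=> A; rewrite sorted_map /enum_mem -enumT.
  apply: sorted_filter; first by move=> x y z; exact: ltn_trans.
  by rewrite -sorted_map val_enum_ord iota_ltn_sorted.
apply: (irr_sorted_eq ltn_trans ltnn) => //.
  rewrite sorted_pairwise; last exact: ltn_trans.
  rewrite pairwise_rcons -sorted_pairwise; last exact: ltn_trans.
  rewrite srt andbT; apply/allP => x /mapP [j]; rewrite mem_enum => Hj ->; exact: HJ.
move=> x; case: (ltnP x m) => Hx.
  have -> : x = val (Ordinal Hx) by [].
  rewrite mem_rcons in_cons !(mem_map val_inj) !mem_enum in_setU1 val_eqE //.
have Hn : forall A : {set 'I_m}, x \notin [seq nat_of_ord j | j <- enum A].
  by move=> A; apply/mapP => [[j _ Ej]]; move: (ltn_ord j); rewrite -Ej ltnNge Hx.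
rewrite mem_rcons in_cons (negbTE (Hn _)) (negbTE (Hn _)) orbF.
by apply/esym/negbTE; rewrite neq_ltn; apply/orP; right; exact: (leq_trans (ltn_ord k) Hx).
Qed.

Lemma cg0 : cg 0 = 1.
Proof. by apply: gram0; rewrite -cardE Gk0 cards0. Qed.

Lemma cg_step k (Hk : (k < m)%N) : newp k ->
  cg k.+1 = cg k * nrm (U (s + k) - oproj (Sp k) (U (s + k))).
Proof.
move=> Hn; rewrite /cg (Gk_step Hk) Hn.
set G := Gk k; set K := Ordinal Hk.
have HG : forall j, j \in G -> (j < K)%N by move=> j /Gk_lt.
have Erc := enum_rcons HG.
have e : (size (enum G) + 1 = size (enum (K |: G)))%N.
  by rewrite -(size_map val (enum (K |: G))) Erc size_rcons size_map addn1.
have -> : BM (K |: G) = castmx (e, erefl d) (col_mx (BM G) (U (s + k))).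
  apply/matrixP => i c; rewrite castmxE mxE /= !mxE.
  case: splitP => [i1 /= Hi1 | i2 /= Hi2]; rewrite Erc nth_rcons size_map.
    by rewrite Hi1 ltn_ord mxE cast_ord_id.
  by rewrite (ord1 i2) /= addn0 in Hi2; rewrite Hi2 ltnn eqxx cast_ord_id (ord1 i2).
rewrite gram_cast gram_col; congr (_ * _).
suff -> : oproj <<BM G>>%MS (U (s + k)) = oproj (Sp k) (U (s + k)) by [].
apply: proj_eqmx.
move/eqmxP: (BM_eq_sum G) => H1; move/eqmxP: (sum_Gk (ltnW Hk)) => H2.
apply/eqmxP; apply: eqmx_trans (genmxE _) _; exact: eqmx_trans H1 H2.
Qed.


Lemma meany x k : (k <= m)%N ->
  [/\ 0 < cg k <= 1, (x - zs x k <= Sp k)%MS &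
      cg k * nrm (oproj (Sp k) x) <= nrm x - nrm (zs x k)].
Proof.
elim: k => [_|k IH Hk].
  rewrite cg0 /= subrr sub0mx ltr01 lexx; split => //.
  have -> : oproj (Sp 0) x = 0.
    by have H := proj_sub (Sp 0) x; move: H; rewrite {2}Sp0 submx0 => /eqP.
  by rewrite dot0l mulr0 subrr.
have Hk' : (k < m)%N by [].
case: (IH (ltnW Hk')) => /andP [c0 c1] HxS Hineq.
rewrite [zs x k.+1]/=.
move: HxS Hineq; set z := zs x k; set u := U (s + k); set a := dotv z u => HxS Hineq.
have Hn : nrm (z - a *: u) = nrm z - a ^+ 2 := unit_step z (HU (s + k)).
have HxS' : (x - (z - a *: u) <= Sp k.+1)%MS.
  have -> : x - (z - a *: u) = (x - z) + a *: u by rewrite opprB addrA addrAC.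
  rewrite Sp_rec; apply: addmx_sub_adds => //; apply: scalemx_sub; by rewrite genmxE.
case Hnew: (newp k); last first.
  have Hu : (u <= Sp k)%MS by move: Hnew; rewrite /newp => /negbFE.
  have Ecg : cg k.+1 = cg k by rewrite /cg (Gk_step Hk') Hnew.
  have Ep : oproj (Sp k.+1) x = oproj (Sp k) x.
    apply: proj_eqmx; rewrite Sp_rec; apply/eqmxP/addsmx_idPl; by rewrite genmxE.
  rewrite Ecg Ep c0 c1; split => //; rewrite Hn.
  have := sqr_ge0 a; lra.
have Hu : ~~ (u <= Sp k)%MS := Hnew.
have Ecg : cg k.+1 = cg k * nrm (u - oproj (Sp k) u) := cg_step Hk' Hnew.
move: Ecg; set v := oproj (Sp k) u; set q := u - v; set p := oproj (Sp k) x => Ecg.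
have u1 : nrm u = 1.
  case: (HU (s + k)) => // H0; exfalso; move: Hu; rewrite /u H0 sub0mx //.
have Hv : (v <= Sp k)%MS := proj_sub _ _.
have Hp : (p <= Sp k)%MS := proj_sub _ _.
have Hq0 : q != 0.
  apply/eqP => H; move: Hu; have -> : u = v by apply/eqP; rewrite -subr_eq0 -/q H.
  by rewrite Hv.
have Hperp : forall y, (y <= Sp k)%MS -> dotv q y = 0 := fun y Hy => proj_perp u Hy.
have Hpy : nrm u = nrm v + nrm q := pythag (Sp k) u.
have s2pos : 0 < nrm q := dotv_gt0 Hq0.
have s21 : nrm q <= 1 by have := dotv_ge0 v; lra.
set ta := dotv x q.
have Euq : u = q + v by rewrite /q subrK.
set w := p + (ta / nrm q) *: q.
have Exw : x - w = (x - p) - (ta / nrm q) *: q by rewrite /w opprD addrA.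
have K1 : forall y, (y <= Sp k)%MS -> dotv (x - w) y = 0.
  by move=> y Hy; rewrite Exw dotBl dotZl proj_perp // (Hperp y Hy) mulr0 subr0.
have K2 : dotv (x - w) q = 0.
  rewrite Exw dotBl dotZl dotBl (dotC p q) (Hperp p Hp) subr0 -/ta.
  by field; rewrite lt0r_neq0.
have Ew : oproj (Sp k.+1) x = w.
  symmetry; apply: proj_uniq.
    rewrite Sp_rec; apply: addmx_sub; first exact: submx_trans Hp (addsmxSl _ _).
    apply: scalemx_sub; rewrite /q; apply: addmx_sub.
      by apply: submx_trans (addsmxSr _ _); rewrite genmxE.
    by rewrite eqmx_opp; apply: submx_trans Hv (addsmxSl _ _).
  move=> y; rewrite Sp_rec => /sub_addsmxP [[y1 y2] /= ->].
  have Hy1 : (y1 *m Sp k <= Sp k)%MS := submxMl _ _.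
  have [lam ->] : exists lam, y2 *m <<u>>%MS = lam *: u.
    have := submxMl y2 <<u>>%MS; rewrite genmxE => /submxP [D ->].
    by exists (D 0 0); rewrite {1}(mx11_scalar D) mul_scalar_mx.
  by rewrite dotDr dotZr K1 // Euq dotDr K2 K1 // addr0 mulr0 addr0.
have Enw : nrm (oproj (Sp k.+1) x) = nrm p + ta ^+ 2 / nrm q.
  rewrite Ew /w dotDl !(dotDr p ((ta / nrm q) *: q)) !dotZl !dotZr (dotC p q) (Hperp p Hp).
  by field; rewrite lt0r_neq0.
have EPz : oproj (Sp k) z = p - (x - z).
  have Ez : z = x - (x - z) by rewrite opprB addrC subrK.
  by rewrite {1}Ez projB (proj_id HxS).
have E4 : z - oproj (Sp k) z = x - p.
  by rewrite EPz opprB addrA [z + _]addrC subrK.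
have ED : nrm x - nrm z = nrm p - nrm (oproj (Sp k) z).
  by rewrite (pythag (Sp k) x) (pythag (Sp k) z) E4 -/p; ring.
have Ea : a = dotv (oproj (Sp k) z) v + ta.
  rewrite /a Euq dotDr (perp_proj z Hv) addrC; congr (_ + _).
  have Ez : z = x - (x - z) by rewrite opprB addrC subrK.
  by rewrite dotC {1}Ez dotBr (Hperp _ HxS) subr0 dotC.
have HCS := CS (oproj (Sp k) z) v.
have Hnv : nrm v = 1 - nrm q by lra.
rewrite Hnv in HCS.
rewrite Ecg Enw Hn; split => //.
  by rewrite mulr_gt0 //= mulr_ile1 // ?dotv_ge0 // ltW.
have E5 : cg k * nrm q * (nrm p + ta ^+ 2 / nrm q) = cg k * nrm q * nrm p + cg k * ta ^+ 2.
  by field; rewrite lt0r_neq0.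
rewrite E5.
have := @meany_step R (cg k) (nrm p) (nrm (oproj (Sp k) z)) (dotv (oproj (Sp k) z) v) ta (nrm q) (nrm x - nrm z) (ltW c0) c1 s2pos s21 (dotv_ge0 p) ED (dotv_ge0 _) Hineq HCS.
rewrite -Ea => H; lra.
Qed.

Lemma meany_block x : (x <= Sp m)%MS -> nrm (zs x m) <= (1 - cg m) * nrm x.
Proof.
move=> Hx; case: (meany x (leqnn m)) => _ _; rewrite proj_id // => H; lra.
Qed.

Lemma cg_bounds : 0 < cg m <= 1.
Proof. by case: (meany 0 (leqnn m)). Qed.

Lemma Sp_BM : (Sp m <= BM (Gk m))%MS.
Proof. by move/eqmxP: (sum_Gk (leqnn m)) => H1; rewrite -H1 sum_sub_BM. Qed.

Lemma Gk_maxindep : row_free (BM (Gk m)) &&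
  [forall j : 'I_m, (j \notin Gk m) ==> ~~ row_free (BM (j |: Gk m))].
Proof.
set G := Gk m.
have Hc : 0 < cg m by case/andP: cg_bounds.
apply/andP; split.
  apply/inj_row_free => v Hv.
  have Hu : BM G *m (BM G)^T \in unitmx by rewrite unitmxE unitfE; exact: lt0r_neq0 Hc.
  by rewrite -(mulmxK Hu v) mulmxA Hv !mul0mx.
apply/forallP => j; apply/implyP => Hj.
have Hjn : ~~ newp j by move: Hj; rewrite inE ltn_ord.
have HuS : (U (s + j) <= BM G)%MS.
  move: Hjn; rewrite /newp negbK => Hu; apply: submx_trans Hu _.
  exact: submx_trans (Sp_mono (ltnW (ltn_ord j))) Sp_BM.
have Hsub : (BM (j |: G) <= BM G)%MS.
  apply: submx_trans (BM_sub_sum _) _; apply/sumsmx_subP => i.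
  rewrite in_setU1 => /orP [/eqP -> | Hi]; first by rewrite genmxE.
  apply: submx_trans (sum_sub_BM G); exact: (sumsmx_sup i Hi (submx_refl _)).
rewrite /row_free; apply/negP => /eqP Hr.
have := mxrankS Hsub; rewrite Hr => H.
have H2 := rank_leq_row (BM G).
have E : size (enum (j |: G)) = (size (enum G)).+1 by rewrite -!cardE cardsU1 Hj.
by rewrite E in H; move: (leq_trans H H2); rewrite ltnn.
Qed.

End Meany.


Section Kacz.
Variable R : realType.
Variables n d : nat.
Variable A : 'M[R]_(n, d).
Variable W : nat -> 'rV[R]_n.

Local Notation nrm x := (dotv x x).
Local Notation U := (unitA A W).

Lemma norm2_sqr m (a : 'rV[R]_m) : norm2 a * norm2 a = dotv a a.
Proof. by rewrite -expr2 sqr_sqrtr // dotv_ge0. Qed.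

Lemma unitA_unit k : U k = 0 \/ nrm (U k) = 1.
Proof.
rewrite /unitA; set a := W k *m A.
have [->|Ha] := eqVneq a 0; first by left; rewrite scaler0.
right; rewrite dotZl dotZr mulrA -invfM norm2_sqr mulVf //.
exact: lt0r_neq0 (dotv_gt0 Ha).
Qed.

Lemma genmx_unitA k : <<U k>>%MS = <<W k *m A>>%MS.
Proof.
rewrite /unitA; set a := W k *m A.
have [->|Ha] := eqVneq a 0; first by rewrite scaler0.
apply: eq_genmx; apply: eqmx_scale; rewrite invr_neq0 // /norm2.
by rewrite lt0r_neq0 // sqrtr_gt0 dotv_gt0.
Qed.

Lemma kacz_step b xstar x0 k : xstar *m A^T = b ->
  kacz A b W x0 k.+1 - xstar =
  (kacz A b W x0 k - xstar) - dotv (kacz A b W x0 k - xstar) (U k) *: U k.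
Proof.
move=> Hb /=; set x := kacz A b W x0 k; rewrite /unitA; set a := W k *m A.
have E1 : dotv (W k) (b - x *m A^T) = - dotv (x - xstar) a.
  by rewrite -Hb -mulmxBl dot_mulT dotC -dotNl opprB.
rewrite E1 dotZr scalerA.
have E2 : (norm2 a)^-1 * dotv (x - xstar) a * (norm2 a)^-1 = dotv (x - xstar) a / dotv a a.
  by rewrite -norm2_sqr invfM; ring.
by rewrite E2 mulNr scaleNr addrAC.
Qed.

End Kacz.


Lemma foldr_min_le (R : realType) (h : R) (l : seq R) x :
  x \in l -> foldr Num.min h l <= x.
Proof.
elim: l => [//|a l IH] /=; rewrite in_cons => /orP [/eqP ->|Hx].
  by rewrite ge_min lexx.
by rewrite ge_min IH ?orbT.
Qed.

Lemma sum_nat_sup (R : realType) d (F : nat -> 'M[R]_d) a k b :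
  (a <= k)%N -> (k < b)%N -> (F k <= \sum_(a <= j < b) F j)%MS.
Proof.
move=> Hak Hkb; rewrite (big_cat_nat Hak (ltnW Hkb)) /=.
apply: submx_trans (addsmxSr _ _); rewrite big_ltn //; exact: addsmxSl.
Qed.

Lemma sum_shift (R : realType) d (F : nat -> 'M[R]_d) s t : (s <= t)%N ->
  (\sum_(s <= j < t.+1) F j)%MS = (\sum_(0 <= i < (t - s).+1) F (s + i)%N)%MS.
Proof.
move=> Hst; rewrite -{1}[s]add0n big_addn subSn //.
by apply: eq_bigr => i _; rewrite addnC.
Qed.

Section Tau.
Variable R : realType.
Variables n d : nat.
Variable A : 'M[R]_(n, d).
Variable W : nat -> 'rV[R]_n.
Variable Rm : 'M[R]_d.
Variable tau : nat -> nat.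
Hypothesis Htau : is_tau_seq A W Rm tau.

Local Notation nrm x := (dotv x x).
Local Notation U := (unitA A W).
Local Notation Bs := (blockstart tau).

Lemma Bs_le l : (Bs l <= tau l.+1)%N.
Proof. by case: Htau => _ H; case: (H l). Qed.

Lemma Bs_span l : (spanmx A W (Bs l) (tau l.+1) == Rm)%MS.
Proof. by case: Htau => _ H; case: (H l). Qed.

Lemma Bs_ge l : (l <= Bs l)%N.
Proof.
elim: l => [//|l IH]; rewrite /= ltnS.
exact: leq_trans IH (Bs_le l).
Qed.

Lemma U_sub_Rm k : (U k <= Rm)%MS.
Proof.
suff H : forall l k, (k < Bs l)%N -> (U k <= Rm)%MS.
  apply: (H k.+1); rewrite /= ltnS; exact: leq_trans (Bs_ge k) (Bs_le k).
elim=> [//|l IH] j; rewrite /= ltnS => Hj.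
case: (ltnP j (Bs l)) => Hjl; first exact: IH.
have /andP [Hs _] := Bs_span l.
apply: submx_trans Hs; rewrite -genmxE genmx_unitA /spanmx.
exact: sum_nat_sup.
Qed.

Lemma Rm_sub_span l : (Rm <= Sp U (Bs l) (tau l.+1 - Bs l).+1)%MS.
Proof.
have /andP [_ Hs] := Bs_span l.
rewrite /Sp -(sum_shift (fun j => <<U j>>%MS)) ?Bs_le //.
by under eq_bigr do rewrite genmx_unitA.
Qed.

Lemma gamma_ge l : 1 - cg U (Bs l) (tau l.+1 - Bs l).+1 (tau l.+1 - Bs l).+1
  <= gammaK A W tau l.+1.
Proof.
rewrite /gammaK /= lerD2l lerN2 /mingram.
apply: foldr_min_le; apply/mapP.
exists (Gk U (Bs l) (tau l.+1 - Bs l).+1 (tau l.+1 - Bs l).+1) => //.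
by rewrite mem_enum inE; exact: (Gk_maxindep (unitA_unit A W)).
Qed.


Variables (b : 'rV[R]_n) (xstar x0 : 'rV[R]_d).
Hypothesis Hb : xstar *m A^T = b.

Definition ee k := kacz A b W x0 k - xstar.
Definition yy k := oproj Rm (ee k).

Lemma yy_step k : yy k.+1 = yy k - dotv (yy k) (U k) *: U k.
Proof.
rewrite /yy /ee kacz_step //; set e := kacz A b W x0 k - xstar.
rewrite projB projZ (proj_id (U_sub_Rm k)).
by rewrite (perp_proj _ (U_sub_Rm k)).
Qed.

Lemma yy_mono k : nrm (yy k.+1) <= nrm (yy k).
Proof.
rewrite yy_step unit_step; last exact: unitA_unit.
by rewrite lerBlDr lerDl sqr_ge0.
Qed.

Lemma yy_mono_le j k : (j <= k)%N -> nrm (yy k) <= nrm (yy j).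
Proof.
move=> /subnK <-; elim: (k - j)%N => [|i IH]; first by rewrite add0n.
by rewrite addSn; apply: le_trans (yy_mono _) IH.
Qed.

Lemma yy_block l : nrm (yy (Bs l.+1)) <= gammaK A W tau l.+1 * nrm (yy (Bs l))
  /\ 0 <= gammaK A W tau l.+1.
Proof.
set s := Bs l; set t := tau l.+1; set m := (t - s).+1.
have Hzs : forall j, zs U s (yy s) j = yy (s + j).
  elim=> [|j IH] /=; first by rewrite addn0.
  by rewrite IH addnS yy_step.
have Hmem : (yy s <= Sp U s m)%MS := submx_trans (proj_sub Rm _) (Rm_sub_span l).
have HB := meany_block (unitA_unit A W) Hmem.
rewrite Hzs /m addnS subnKC ?Bs_le // in HB.
have /andP [_ Hc] := cg_bounds (unitA_unit A W) s m.
have Hg := gamma_ge l.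
have Hg0 : 0 <= gammaK A W tau l.+1 by apply: le_trans Hg; rewrite subr_ge0.
split => //; apply: (le_trans HB); apply: ler_wpM2r => //; exact: dotv_ge0.
Qed.

Lemma yy_prod L : nrm (yy (Bs L)) <= (\prod_(1 <= j < L.+1) gammaK A W tau j) * nrm (yy 0).
Proof.
elim: L => [|L IH]; first by rewrite big_geq // mul1r.
rewrite big_nat_recr //=.
case: (yy_block L) => H1 H2; apply: le_trans H1 _.
apply: le_trans (ler_wpM2l H2 IH) _.
by rewrite mulrA [gammaK A W tau L.+1 * _]mulrC.
Qed.

End Tau.

Unset Implicit Arguments. Set Strict Implicit.
Local Close Scope ring_scope.
Local Open Scope classical_set_scope.
Local Open Scope ring_scope.

Lemma cvg_sum0 {R : realType} {n} {g : 'I_n -> nat -> R} :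
  (forall i, g i @ \oo --> (0:R)) -> (fun k => \sum_(i < n) g i k) @ \oo --> (0:R).
Proof.
elim: n g => [|n IH] g H.
  by under eq_cvg do rewrite big_ord0; exact: cvg_cst.
under eq_cvg do rewrite big_ord_recr /=.
have := cvgD (IH (fun i => g (widen_ord (leqnSn n) i)) (fun i => H _)) (H ord_max).
move=> H2; have H3 := H2 _; rewrite addr0 in H3; exact: H3.
Qed.

Lemma cst_cvg {R : realType} {a b : R} : (fun _ : nat => a) @ \oo --> b -> a = b.
Proof.
move=> H. have H2 : (fun _ : nat => a) @ \oo --> a := cvg_cst a.
by rewrite -(cvg_lim _ H) ?lim_cst.
Qed.

Lemma get_N {R : realType} {f : nat -> R} : f @ \oo --> (0:R) ->
  forall e, 0 < e -> exists N, forall k, (N <= k)%N -> `|f k| < e.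
Proof.
move=> /cvgrPdist_lt H e e0; case: (H e e0) => N _ HN; exists N => k Hk.
by have := HN k Hk; rewrite sub0r normrN.
Qed.

Lemma mk_cvg {R : realType} {f : nat -> R} {l : R} :
  (forall e, 0 < e -> exists N, forall k, (N <= k)%N -> `|l - f k| < e) -> f @ \oo --> l.
Proof.
move=> H; apply/cvgrPdist_lt => e e0; case: (H e e0) => N HN; exists N => //.
Qed.

Theorem mainTheorem11 (R : realType) (dT : measure_display) (T : measurableType dT)
  (P : probability T R) (n d : nat) (A : 'M[R]_(n, d)) (b : 'rV[R]_n)
  (xstar : 'rV[R]_d) (w : T -> 'rV[R]_n) (ws : nat -> T -> 'rV[R]_n)
  (Rm Vm : 'M[R]_d) (x0 : 'rV[R]_d) :
  xstar *m A^T = b ->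
  (forall i, measurable_fun setT (fun om => w om 0 i)) ->
  (forall l i, measurable_fun setT (fun om => ws l om 0 i)) ->
  (* R(w) = N(w)^perp, N(w) = span {z | P[z'A'w = 0] = 1} *)
  (forall v : 'rV[R]_d, (v <= Rm)%MS <->
     (forall z : 'rV[R]_d,
        P [set om | dotv z (w om *m A) = 0] = 1%E -> dotv v z = 0)) ->
  (* V(w) perp R(w) and V(w) (+) R(w) = row(A) *)
  (forall u v : 'rV[R]_d, (u <= Vm)%MS -> (v <= Rm)%MS -> dotv u v = 0) ->
  mxdirect (Vm + Rm) -> (Vm + Rm == A)%MS ->
  (forall l, P [set om | (ws l om *m A <= Rm)%MS] = 1%E) ->
  (* the iteration presupposes A'w_k <> 0 *)
  (forall l, P [set om | ws l om *m A != 0] = 1%E) ->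
  exists N : set T, [/\ measurable N, P N = 0%E &
    forall om, ~ N om ->
      forall tau : nat -> nat,
        is_tau_seq A (fun k => ws k om) Rm tau ->
        (fun l => \prod_(1 <= j < l.+1) gammaK A (fun k => ws k om) tau j)
           @ \oo --> (0 : R) ->
        ((forall i, (fun k => (kacz A b (fun k => ws k om) x0 k *m A^T) 0 i)
                      @ \oo --> b 0 i)
         <-> orthproj Vm x0 = orthproj Vm xstar)].
Proof.
move=> Hb _ _ _ HVR _ HVA _ _.
exists set0; split; [exact: measurable0 | exact: measure0 |].
move=> om _ tau Htau Hprod.
move: Htau Hprod; set W := fun k => ws k om => Htau Hprod.
pose e k := kacz A b W x0 k - xstar.
pose y k := yy A W Rm b xstar x0 k.
have HVmA : (Vm <= A)%MS by case/andP: HVA => H _; exact: submx_trans (addsmxSl Vm Rm) H.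
have HAVR : (A <= Vm + Rm)%MS by case/andP: HVA.
have Hinv : forall v, (v <= Vm)%MS -> forall k, dotv (e k) v = dotv (e 0%N) v.
  move=> v Hv; elim=> [//|k IH]; rewrite /e kacz_step // (dotBl (kacz A b W x0 k - xstar)) dotZl -/(e k) IH.
  by rewrite (dotC (unitA A W k) v) (HVR v (unitA A W k) Hv (U_sub_Rm Htau k)) mulr0 subr0.
have Hy : forall eps, 0 < eps -> exists N, forall k, (N <= k)%N -> dotv (y k) (y k) < eps.
  move=> eps eps0.
  set r0 := dotv (y 0%N) (y 0%N).
  have r0ge : 0 <= r0 by exact: dotv_ge0.
  have e'0 : 0 < eps / (r0 + 1) by rewrite divr_gt0 // ltr_wpDl.
  case: (get_N Hprod _ e'0) => N HN.
  exists (blockstart tau N) => k Hk.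
  have H1 := yy_mono_le Htau x0 Hb Hk.
  have H2 := yy_prod Htau x0 Hb N.
  have H3 := HN N (leqnn N).
  set Pi := \prod_(1 <= j < N.+1) gammaK A W tau j in H2 H3.
  have H4 : Pi * r0 <= `|Pi| * (r0 + 1).
    apply: le_trans (ler_wpM2r r0ge (ler_norm Pi)) _.
    by rewrite ler_wpM2l // lerDl.
  have H5 : `|Pi| * (r0 + 1) < eps.
    have Hr : 0 < r0 + 1 by rewrite ltr_wpDl.
    by rewrite -[X in _ < X](divfK (lt0r_neq0 Hr) eps) ltr_pM2r.
  rewrite /y; apply: le_lt_trans H1 _; apply: le_lt_trans H2 _; exact: le_lt_trans H4 H5.
split.
- move=> Hc.
  set v := orthproj Vm (x0 - xstar).
  have Hv : (v <= Vm)%MS := proj_sub Vm (x0 - xstar).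
  have [c Hcv] : exists c, v = c *m A by apply/submxP; exact: submx_trans Hv HVmA.
  have Hconst : forall k, dotv (e k) v = dotv v v.
    move=> k; rewrite Hinv // (perp_proj _ Hv) //.
  have Hsum : forall k, dotv (e k) v =
      \sum_(i < n) c 0 i * ((kacz A b W x0 k *m A^T) 0 i - b 0 i).
    move=> k; rewrite dotC {1}Hcv -dot_mulT dotvE; apply: eq_bigr => i _.
    by rewrite /e mulmxBl Hb mxE [(- b) 0 i]mxE.
  have Hlim : (fun k => \sum_(i < n) c 0 i * ((kacz A b W x0 k *m A^T) 0 i - b 0 i))
      @ \oo --> (0:R).
    apply: cvg_sum0 => i.
    have := cvgM (cvg_cst (c 0 i)) (cvgB (Hc i) (cvg_cst (b 0 i))).
    move=> H'; rewrite subrr mulr0 in H'; apply: H'.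
  have Hfun : (fun k => \sum_(i < n) c 0 i * ((kacz A b W x0 k *m A^T) 0 i - b 0 i))
      = (fun _ => dotv v v).
    by apply: funext => k; rewrite -Hsum Hconst.
  rewrite Hfun in Hlim.
  have /dotv_eq0 Hv0 := cst_cvg Hlim.
  apply/eqP; rewrite -subr_eq0; apply/eqP.
  by rewrite -[orthproj Vm x0 - _]/(oproj Vm x0 - oproj Vm xstar) -projB.
- move=> Hp i.
  have /sub_addsmxP [[p1 p2] /= Hrow] : (row i A <= Vm + Rm)%MS by exact: submx_trans (row_sub i A) HAVR.
  set vv := p1 *m Vm in Hrow; set rr := p2 *m Rm in Hrow.
  have Hvv : (vv <= Vm)%MS by exact: submxMl.
  have Hrr : (rr <= Rm)%MS by exact: submxMl.
  have He0 : oproj Vm (e 0%N) = 0.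
    by rewrite /e /= projB; apply/eqP; rewrite subr_eq0; apply/eqP; exact: Hp.
  have Hf : forall k, (kacz A b W x0 k *m A^T) 0 i = b 0 i + dotv (y k) rr.
    move=> k; rewrite dot_mxT.
    have -> : b 0 i = dotv xstar (row i A) by rewrite -Hb dot_mxT.
    have -> : dotv (kacz A b W x0 k) (row i A) = dotv xstar (row i A) + dotv (e k) (row i A).
      by rewrite /e dotBl addrC subrK.
    congr (_ + _); rewrite Hrow dotDr Hinv // (perp_proj _ Hvv) He0 dot0l add0r.
    by rewrite (perp_proj _ Hrr).
  apply: mk_cvg => eps eps0.
  set nr := dotv rr rr.
  have nr0 : 0 <= nr by exact: dotv_ge0.
  have e2 : 0 < eps ^+ 2 / (nr + 1) by rewrite divr_gt0 ?exprn_gt0 // ltr_wpDl.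
  case: (Hy _ e2) => N HN; exists N => k Hk.
  rewrite Hf opprD addrA subrr sub0r normrN.
  have H1 := CS (y k) rr.
  have H2 := HN k Hk.
  have H3 : dotv (y k) (y k) * nr <= dotv (y k) (y k) * (nr + 1).
    by rewrite ler_wpM2l ?dotv_ge0 // lerDl.
  have H4 : dotv (y k) (y k) * (nr + 1) < eps ^+ 2.
    have Hr : 0 < nr + 1 by rewrite ltr_wpDl.
    by rewrite -[X in _ < X](divfK (lt0r_neq0 Hr) (eps ^+ 2)) ltr_pM2r.
  have H5 : `|dotv (y k) rr| ^+ 2 < eps ^+ 2.
    by rewrite real_normK ?num_real //; apply: le_lt_trans H1 _; apply: le_lt_trans H3 H4.
  have H6 := normr_ge0 (dotv (y k) rr).
  nra.
Qed.
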